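(* There is an absolute constant $c_0\in(0,1)$ such that the following holds. Let $A\in[0,1]^{m\times n}$ with $0<\Delta_1<c_0$, let $x\in\mathbb{R}_{\ge0}^n$, and let $\delta\in(0,1)$ with $\delta\ge2\sqrt{\Delta_1\ln(1/\Delta_1)}$ and $\alpha=\frac{1+\delta+\delta^2/2}{1-\delta}$. Let $i\in[m]$ and let $\theta_i\in(0,\Delta_1]$ satisfy $\sum_{j:A_{i,j}\le\theta_i}A_{i,j}x_j\ge1-\delta$. If $z$ is the randomized rounding of $\alpha x$, then $\Pr[(Az)_i<1]\le\theta_i$.
   Context: $\Delta_1=\max_{j\in[n]}\sum_{i=1}^mA_{i,j}$. Randomized rounding of $\alpha x$: $z\in\mathbb{Z}_{\ge0}^n$ is the random vector with independent coordinates $z_j=\lfloor\alpha x_j\rfloor+B_j$, where $B_j\in\{0,1\}$ is Bernoulli with $\Pr[B_j=1]=\alpha x_j-\lfloor\alpha x_j\rfloor$. *)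

(* Defs.v *)
From Stdlib Require Import Reals Lra List.
Import ListNotations.
Open Scope R_scope.

Fixpoint rsum (f : nat -> R) (k : nat) : R :=
  match k with O => 0 | S k' => rsum f k' + f k' end.

Fixpoint rprod (f : nat -> R) (k : nat) : R :=
  match k with O => 1 | S k' => rprod f k' * f k' end.

(* Delta_1 = max_{j<n} sum_{i<m} A i j  (0 if n = 0) *)
Fixpoint rmax_upto (f : nat -> R) (k : nat) : R :=
  match k with O => 0 | S k' => Rmax (rmax_upto f k') (f k') end.

Definition Delta1 (m n : nat) (A : nat -> nat -> R) : R :=
  rmax_upto (fun j => rsum (fun i => A i j) m) n.

Definition rfloor (r : R) : R := IZR (Int_part r).

(* All bit vectors of length n (the outcomes of the Bernoulli variables B_j). *)
Fixpoint bitvecs (n : nat) : list (list bool) :=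
  match n with
  | O => [[]]
  | S k => map (cons false) (bitvecs k) ++ map (cons true) (bitvecs k)
  end.

Definition bit (b : list bool) (j : nat) : R := if nth j b false then 1 else 0.

(* Randomized rounding of y (y = alpha x): z_j = floor(y_j) + B_j, with
   B_j independent Bernoulli, Pr[B_j = 1] = y_j - floor(y_j). *)
Definition rr_prob (y : nat -> R) (j : nat) : R := y j - rfloor (y j).

Definition rr_weight (n : nat) (y : nat -> R) (b : list bool) : R :=
  rprod (fun j => if nth j b false then rr_prob y j else 1 - rr_prob y j) n.

Definition rr_z (y : nat -> R) (b : list bool) (j : nat) : R :=
  rfloor (y j) + bit b j.

Definition rr_Pr (n : nat) (y : nat -> R) (E : (nat -> R) -> bool) : R :=
  fold_right Rplus 0
    (map (fun b => if E (rr_z y b) then rr_weight n y b else 0) (bitvecs n)).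

Definition Rltb (a b : R) : bool := if Rlt_dec a b then true else false.
Definition Rleb (a b : R) : bool := if Rle_dec a b then true else false.

(* Main.v *)
Require Import Defs.
From Stdlib Require Import Reals Lra Lia List.
From Coquelicot Require Import Coquelicot.
Open Scope R_scope.

Lemma exp_neg_bound u : 0 <= u -> exp (-u) <= 1 - u + u^2/2.
Proof.
intros Hu. destruct (Req_dec u 0) as [->|Hu0].
{ rewrite Ropp_0, exp_0. lra. }
destruct (MVT_cor2 (fun v => 1 - v + v^2/2 - exp (-v)) (fun v => -1 + v + exp (-v)) 0 u) as [c [Hc1 Hc2]].
- lra.
- intros c _. apply is_derive_Reals. auto_derive; auto. simpl; field.
- assert (0 <= -1 + c + exp (-c)) by (pose proof (exp_ineq1_le (-c)); lra).
  rewrite Ropp_0, exp_0 in Hc1. nra.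
Qed.

Lemma rprod_shift f k : rprod f (S k) = f 0%nat * rprod (fun j => f (S j)) k.
Proof.
induction k; simpl in *. - ring. - rewrite IHk. ring.
Qed.

Lemma rprod_ext f g k : (forall j, (j < k)%nat -> f j = g j) -> rprod f k = rprod g k.
Proof.
induction k; intros H; simpl; auto. rewrite IHk by (intros; apply H; lia). rewrite H by lia. auto.
Qed.

Lemma rsum_ext f g k : (forall j, (j < k)%nat -> f j = g j) -> rsum f k = rsum g k.
Proof.
induction k; intros H; simpl; auto. rewrite IHk by (intros; apply H; lia). rewrite H by lia. auto.
Qed.

Lemma rprod_mul f g k : rprod (fun j => f j * g j) k = rprod f k * rprod g k.
Proof. induction k; simpl. ring. rewrite IHk; ring. Qed.

Lemma rprod_exp f k : rprod (fun j => exp (f j)) k = exp (rsum f k).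
Proof. induction k; simpl. rewrite exp_0; auto. rewrite IHk, exp_plus; auto. Qed.

Lemma rsum_scal c f k : rsum (fun j => c * f j) k = c * rsum f k.
Proof. induction k; simpl. ring. rewrite IHk; ring. Qed.

Lemma rsum_le f g k : (forall j, (j < k)%nat -> f j <= g j) -> rsum f k <= rsum g k.
Proof.
induction k; intros H; simpl. lra. pose proof (H k ltac:(lia)).
assert (rsum f k <= rsum g k) by (apply IHk; intros; apply H; lia). lra.
Qed.

Lemma rprod_nonneg f k : (forall j, (j < k)%nat -> 0 <= f j) -> 0 <= rprod f k.
Proof.
induction k; intros H; simpl. lra. apply Rmult_le_pos. apply IHk; intros; apply H; lia. apply H; lia.
Qed.

Lemma rprod_le f g k : (forall j, (j < k)%nat -> 0 <= f j <= g j) -> rprod f k <= rprod g k.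
Proof.
induction k; intros H; simpl. lra.
pose proof (H k ltac:(lia)).
assert (rprod f k <= rprod g k) by (apply IHk; intros; apply H; lia).
assert (0 <= rprod f k) by (apply rprod_nonneg; intros; apply H; lia).
apply Rmult_le_compat; lra.
Qed.

Definition sumL (l : list R) := fold_right Rplus 0 l.

Lemma sumL_app l1 l2 : sumL (l1 ++ l2) = sumL l1 + sumL l2.
Proof. induction l1; simpl. ring. unfold sumL in *. simpl. rewrite IHl1. ring. Qed.

Lemma sumL_scal {T} c (g : T -> R) l : sumL (map (fun b => c * g b) l) = c * sumL (map g l).
Proof. induction l; unfold sumL in *; simpl. ring. rewrite IHl. ring. Qed.

Lemma sumL_le {T} (f g : T -> R) l : (forall b, f b <= g b) -> sumL (map f l) <= sumL (map g l).
Proof. intros H; induction l; unfold sumL in *; simpl. lra. pose proof (H a). lra. Qed.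

Lemma sumL_ext {T} (f g : T -> R) l : (forall b, f b = g b) -> sumL (map f l) = sumL (map g l).
Proof. intros H; induction l; unfold sumL in *; simpl. lra. rewrite H, IHl. auto. Qed.

Lemma bitvec_factor n : forall F : nat -> bool -> R,
  sumL (map (fun b => rprod (fun j => F j (nth j b false)) n) (bitvecs n))
  = rprod (fun j => F j true + F j false) n.
Proof.
induction n; intros F.
- simpl. unfold sumL; simpl. ring.
- simpl bitvecs. rewrite map_app, sumL_app, !map_map.
  rewrite (sumL_ext _ (fun b => F 0%nat false * rprod (fun j => F (S j) (nth j b false)) n))
    by (intros b; rewrite rprod_shift; reflexivity).
  rewrite (sumL_ext (fun x => rprod _ _) (fun b => F 0%nat true * rprod (fun j => F (S j) (nth j b false)) n))
    by (intros b; rewrite rprod_shift; reflexivity).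
  rewrite !sumL_scal, !(IHn (fun j => F (S j))), rprod_shift. ring.
Qed.

Lemma thetalog th D : 0 < th -> th <= D -> D <= 1/3 -> - th * ln th <= - D * ln D.
Proof.
intros H0 H1 H2.
assert (HD : 0 < D) by lra.
assert (Hl : ln D - ln th <= D / th - 1).
{ pose proof (exp_ineq1_le (ln (D / th))). rewrite exp_ln in H by (apply Rdiv_lt_0_compat; lra).
  unfold Rdiv in *. rewrite ln_mult, ln_Rinv in H by (try apply Rinv_0_lt_compat; lra). lra. }
assert (Hl3 : 1 <= - ln D).
{ assert (ln D <= ln (1/3)) by (apply ln_le; lra).
  unfold Rdiv in H. rewrite Rmult_1_l, ln_Rinv in H by lra.
  assert (1 <= ln 3). { rewrite <- ln_exp at 1. apply ln_le. apply exp_pos. apply exp_le_3. }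
  lra. }
assert (th * (ln D - ln th) <= D - th).
{ replace (D - th) with (th * (D / th - 1)) by (field; lra). apply Rmult_le_compat_l; lra. }
assert ((D - th) * 1 <= (D - th) * (- ln D)) by (apply Rmult_le_compat_l; lra).
nra.
Qed.

Theorem mainTheorem16 :
  exists c0 : R, 0 < c0 < 1 /\
  forall (m n : nat) (A : nat -> nat -> R) (x : nat -> R)
         (delta : R) (i : nat) (theta : R),
    (forall i' j, (i' < m)%nat -> (j < n)%nat -> 0 <= A i' j <= 1) ->
    0 < Delta1 m n A -> Delta1 m n A < c0 ->
    (forall j, (j < n)%nat -> 0 <= x j) ->
    0 < delta < 1 ->
    delta >= 2 * sqrt (Delta1 m n A * ln (1 / Delta1 m n A)) ->
    (i < m)%nat ->
    0 < theta <= Delta1 m n A ->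
    rsum (fun j => if Rleb (A i j) theta then A i j * x j else 0) n >= 1 - delta ->
    let alpha := (1 + delta + delta ^ 2 / 2) / (1 - delta) in
    rr_Pr n (fun j => alpha * x j)
      (fun z => Rltb (rsum (fun j => A i j * z j) n) 1) <= theta.
Proof.
exists (1/3). split. lra.
intros m n A x delta i theta HA HD0 HD1 Hx Hd Hds Hi Hth Hsum alpha.
set (D := Delta1 m n A) in *.
set (y := fun j => alpha * x j).
set (M := 1 + delta + delta^2/2).
set (t := delta + delta^2/2).
set (lam := t / (theta * M)).
set (a := fun j => if Rleb (A i j) theta then A i j else 0).
set (p := rr_prob y).
set (f := fun j => rfloor (y j)).
assert (HM : 0 < M) by (unfold M; nra).
assert (Ht : 0 < t) by (unfold t; nra).
assert (Hlam : 0 <= lam) by (unfold lam; apply Rlt_le, Rdiv_lt_0_compat; nra).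
assert (Halpha : 0 < alpha) by (unfold alpha; apply Rdiv_lt_0_compat; nra).
assert (Hy : forall j, (j < n)%nat -> 0 <= y j).
{ intros j Hj. unfold y. pose proof (Hx j Hj). nra. }
assert (Hf : forall j, (j < n)%nat -> 0 <= f j /\ 0 <= p j <= 1 /\ f j + p j = y j).
{ intros j Hj. unfold f, p, rr_prob, rfloor. pose proof (base_Int_part (y j)).
  pose proof (Hy j Hj).
  assert (IZR (Int_part (y j)) > -1) by lra.
  apply lt_IZR in H1. assert (0 <= Int_part (y j))%Z by lia. apply IZR_le in H2.
  repeat split; lra. }
assert (Ha : forall j, (j < n)%nat -> 0 <= a j <= A i j /\ a j <= theta).
{ intros j Hj. unfold a, Rleb. pose proof (HA i j Hi Hj).
  destruct (Rle_dec (A i j) theta); lra. }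
set (F := fun j (b : bool) =>
  (if b then p j else 1 - p j) * exp (- (lam * (a j * (f j + if b then 1 else 0))))).
assert (S1 : rr_Pr n y (fun z => Rltb (rsum (fun j => A i j * z j) n) 1)
   <= exp lam * rprod (fun j => F j true + F j false) n).
{ rewrite <- bitvec_factor, <- sumL_scal. unfold rr_Pr. fold sumL.
  apply sumL_le. intros b.
  assert (Hw : 0 <= rr_weight n y b).
  { unfold rr_weight. apply rprod_nonneg. intros j Hj. destruct (Hf j Hj) as [_ [Hp _]].
    fold p. destruct (nth j b false); lra. }
  assert (Heq : rr_weight n y b * exp (lam * (1 - rsum (fun j => a j * rr_z y b j) n))
     = exp lam * rprod (fun j => F j (nth j b false)) n).
  { replace (lam * (1 - rsum (fun j => a j * rr_z y b j) n)) with
      (lam + rsum (fun j => - (lam * (a j * rr_z y b j))) n).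
    2:{ rewrite (rsum_ext _ (fun j => (-lam) * (a j * rr_z y b j))) by (intros; ring).
        rewrite rsum_scal. ring. }
    rewrite exp_plus, <- rprod_exp. unfold rr_weight.
    rewrite Rmult_comm, Rmult_assoc, <- rprod_mul. f_equal.
    apply rprod_ext. intros j _. unfold F, rr_z, bit. fold p. fold (f j).
    destruct (nth j b false); ring. }
  rewrite <- Heq.
  unfold Rltb. destruct (Rlt_dec _ 1) as [Hlt|_].
  - assert (rsum (fun j => a j * rr_z y b j) n <= rsum (fun j => A i j * rr_z y b j) n).
    { apply rsum_le. intros j Hj. destruct (Ha j Hj) as [Ha1 _].
      assert (0 <= rr_z y b j).
      { unfold rr_z, bit. destruct (Hf j Hj) as [Hf1 _]. fold (f j).
        destruct (nth j b false); lra. }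
      apply Rmult_le_compat_r; lra. }
    assert (1 <= exp (lam * (1 - rsum (fun j => a j * rr_z y b j) n))).
    { assert (0 <= lam * (1 - rsum (fun j => a j * rr_z y b j) n)) by (apply Rmult_le_pos; lra).
      pose proof (exp_ineq1_le (lam * (1 - rsum (fun j => a j * rr_z y b j) n))). lra. }
    nra.
  - apply Rmult_le_pos; [lra | apply Rlt_le, exp_pos]. }
set (g := fun j => (-lam + lam^2 * theta / 2) * alpha * (a j * x j)).
assert (S3 : rprod (fun j => F j true + F j false) n <= rprod (fun j => exp (g j)) n).
{ apply rprod_le. intros j Hj.
  destruct (Hf j Hj) as [Hf1 [Hp Hfp]]. destruct (Ha j Hj) as [[Ha1 Ha2] Ha3].
  set (u := lam * a j).
  assert (Hu : 0 <= u) by (unfold u; apply Rmult_le_pos; lra).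
  unfold F.
  replace (- (lam * (a j * (f j + 1)))) with (- (u * f j) + - u) by (unfold u; ring).
  replace (- (lam * (a j * (f j + 0)))) with (- (u * f j)) by (unfold u; ring).
  rewrite exp_plus.
  pose proof (exp_pos (- (u * f j))). pose proof (exp_pos (-u)).
  split. { apply Rplus_le_le_0_compat; apply Rmult_le_pos; nra. }
  pose proof (exp_neg_bound u Hu).
  pose proof (exp_ineq1_le (p j * (-u + u^2/2))).
  assert (E1 : p j * (exp (- (u * f j)) * exp (- u)) + (1 - p j) * exp (- (u * f j))
          = exp (- (u * f j)) * (1 + p j * (exp (-u) - 1))) by ring.
  rewrite E1.
  apply Rle_trans with (exp (- (u * f j)) * exp (p j * (- u + u ^ 2 / 2))).
  { apply Rmult_le_compat_l. lra. nra. }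
  rewrite <- exp_plus. apply exp_le_3 || idtac.
  destruct (Req_dec (- (u * f j) + p j * (- u + u ^ 2 / 2)) (g j)) as [E|E].
  { rewrite E; lra. }
  apply Rlt_le, exp_increasing.
  assert (- (u * f j) + p j * (- u + u ^ 2 / 2) <= g j).
  { unfold g, u. assert (Hy' : f j + p j = alpha * x j) by (rewrite Hfp; reflexivity).

    assert (a j * a j * p j <= theta * a j * (f j + p j)).
    { assert (a j * a j * p j <= theta * a j * p j) by (apply Rmult_le_compat_r; [lra|]; apply Rmult_le_compat_r; lra).
      assert (theta * a j * p j <= theta * a j * (f j + p j)) by (apply Rmult_le_compat_l; nra). lra. }
    assert (lam^2 * (a j * a j * p j) <= lam^2 * (theta * a j * (f j + p j))) by (apply Rmult_le_compat_l; nra).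
    assert (EQ : (- (lam * a j * f j) + p j * (- (lam * a j) + (lam * a j) ^ 2 / 2)) = (- (lam * (a j * (f j + p j))) + lam^2 * (a j * a j * p j) / 2)). { unfold Rdiv; ring. }
    rewrite EQ. replace ((- lam + lam ^ 2 * theta / 2) * alpha * (a j * x j)) with (- (lam * (a j * (f j + p j))) + lam^2 * (theta * a j * (f j + p j)) / 2) by (rewrite Hy'; unfold Rdiv; ring). lra. }
  lra. }
rewrite rprod_exp in S3.
assert (Hg : rsum g n = (-lam + lam^2*theta/2) * alpha *
    rsum (fun j => if Rleb (A i j) theta then A i j * x j else 0) n).
{ unfold g. rewrite rsum_scal. f_equal. apply rsum_ext. intros j _. unfold a.
  destruct (Rleb (A i j) theta); ring. }
set (S := rsum (fun j => if Rleb (A i j) theta then A i j * x j else 0) n) in *.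
assert (HlamT : lam * theta = t / M) by (unfold lam; field; split; lra).
assert (HtM : t / M < 1). { apply Rmult_lt_reg_r with M; [lra|]. unfold Rdiv; rewrite Rmult_assoc, Rinv_l, Rmult_1_r by lra. unfold t, M; lra. }
assert (HK : -lam + lam^2*theta/2 <= 0).
{ replace (-lam + lam^2*theta/2) with (lam * (-1 + (lam*theta)/2)) by (unfold Rdiv; ring).
  rewrite HlamT. assert (0 <= t/M) by (apply Rlt_le, Rdiv_lt_0_compat; lra). nra. }
assert (HaS : M <= alpha * S).
{ replace M with (alpha * (1 - delta)) by (unfold alpha, M; field; lra).
  apply Rmult_le_compat_l; lra. }
assert (Hexp : lam + rsum g n <= - t^2 / (2 * theta * M)).
{ rewrite Hg.
  assert ((-lam + lam^2*theta/2) * alpha * S <= (-lam + lam^2*theta/2) * M).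
  { rewrite Rmult_assoc. apply Rmult_le_compat_neg_l; lra. }
  assert (lam + (-lam + lam^2*theta/2) * M = - t^2 / (2 * theta * M)).
  { replace (lam + (-lam + lam^2*theta/2) * M) with (lam*(1-M) + lam^2*theta*M/2) by (unfold Rdiv; ring).
    replace (1 - M) with (- t) by (unfold t, M; unfold Rdiv; ring).
    unfold lam. field. lra. }
  lra. }
assert (Hd2 : 4 * (D * ln (1/D)) <= delta^2).
{ assert (0 <= D * ln (1/D)).
  { apply Rmult_le_pos. lra. unfold Rdiv. rewrite Rmult_1_l, ln_Rinv by lra.
    assert (ln D < ln 1) by (apply ln_increasing; lra). rewrite ln_1 in H. lra. }
  pose proof (sqrt_sqrt _ H). pose proof (sqrt_pos (D * ln (1/D))). nra. }
unfold Rdiv in Hd2. rewrite Rmult_1_l, ln_Rinv in Hd2 by lra.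
pose proof (thetalog theta D ltac:(lra) ltac:(lra) ltac:(lra)) as Htl.
assert (Hlnth : - delta^2 / (4 * theta) <= ln theta).
{ apply Rmult_le_reg_r with theta. lra.
  replace (- delta^2 / (4 * theta) * theta) with (- delta^2/4) by (field; lra). nra. }
assert (Hcmp : - t^2 / (2 * theta * M) <= - delta^2 / (4 * theta)).
{ assert (0 <= t^2 / (2*theta*M) - delta^2/(4*theta)).
  { replace (t^2 / (2*theta*M) - delta^2/(4*theta)) with ((2*t^2 - delta^2*M) / (4*theta*M))
      by (field; lra).
    apply Rmult_le_pos. unfold t, M. nra. apply Rlt_le, Rinv_0_lt_compat. nra. }
  unfold Rdiv in *. lra. }
eapply Rle_trans. apply S1.
eapply Rle_trans. apply Rmult_le_compat_l. apply Rlt_le, exp_pos. apply S3.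
rewrite <- exp_plus. rewrite <- (exp_ln theta) by lra.
destruct (Req_dec (lam + rsum g n) (ln theta)) as [E|E]. rewrite E; lra.
apply Rlt_le, exp_increasing. lra.
Qed.
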